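(* Let $A$ and $B$ be discrete random variables with finite supports such that $\{A,B\}$ is quasi-uniform. Then there exists a random variable $W$, jointly distributed with $(A,B)$, such that $H(W)=H(A\mid B)$ and $H(A\mid B,W)=0$.
   Context: A family of random variables $\{X_i:i\in\mathcal N\}$ is quasi-uniform if for every subset $\alpha\subseteq\mathcal N$, the random variable $(X_i:i\in\alpha)$ is uniformly distributed over its support; for $\{A,B\}$ this means $A$, $B$ and $(A,B)$ are each uniform on their supports. *)

(* Defs.v *)
From mathcomp Require Import all_boot all_order all_algebra.
From mathcomp Require Import reals exp.
Set Implicit Arguments. Unset Strict Implicit. Unset Printing Implicit Defensive.
Import Order.TTheory GRing.Theory Num.Theory.
Local Open Scope ring_scope.

Section Info.
Variable R : realType.

Definition is_pmf (T : finType) (f : {ffun T -> R}) : Prop :=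
  (forall x, 0 <= f x) /\ \sum_(x : T) f x = 1.

Definition uniform_on_support (T : finType) (f : {ffun T -> R}) : Prop :=
  forall x y, 0 < f x -> 0 < f y -> f x = f y.

Definition fst_marg (X Y : finType) (p : {ffun X * Y -> R}) : {ffun X -> R} :=
  [ffun x => \sum_(y : Y) p (x, y)].
Definition snd_marg (X Y : finType) (p : {ffun X * Y -> R}) : {ffun Y -> R} :=
  [ffun y => \sum_(x : X) p (x, y)].

Definition entropy (T : finType) (f : {ffun T -> R}) : R :=
  - \sum_(x : T | 0 < f x) f x * ln (f x).

Definition cond_entropy (X Y : finType) (p : {ffun X * Y -> R}) : R :=
  - \sum_(u : X * Y | 0 < p u) p u * ln (p u / snd_marg p u.2).

Definition quasi_uniform2 (X Y : finType) (p : {ffun X * Y -> R}) : Prop :=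
  [/\ uniform_on_support (fst_marg p), uniform_on_support (snd_marg p)
    & uniform_on_support p].

End Info.

(* Main.v *)
Require Import Defs.
From mathcomp Require Import all_boot all_order all_algebra.
From mathcomp Require Import reals exp.
Import Order.TTheory GRing.Theory Num.Theory.
Local Open Scope ring_scope.

Lemma sum_index_seq (R : realType) (T : eqType) (s : seq T) (w : nat) :
  uniq s -> \sum_(a <- s) ((w == index a s)%:R : R) = (w < size s)%:R.
Proof.
elim: s w => [|x s IH] w /=; first by rewrite big_nil.
case/andP=> xs us; rewrite big_cons /= eqxx.
rewrite (eq_big_seq (fun a => ((w == (index a s).+1)%:R : R))); last first.
  move=> a ain /=; case: (x =P a) => // xa; by rewrite xa ain in xs.
case: w => [|w] /=.
  by rewrite big1 ?addr0 // => a _.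
by rewrite add0r IH.
Qed.

Lemma sum_index_set (R : realType) (T : finType) (S : {set T}) (w : nat) :
  \sum_(a in S) ((w == index a (enum S))%:R : R) = (w < #|S|)%:R.
Proof. by rewrite -big_enum sum_index_seq ?enum_uniq // cardE. Qed.

Lemma sum_ord_eq (R : realType) n (i : nat) : (i < n)%N ->
  \sum_(w : 'I_n) ((val w == i)%:R : R) = 1.
Proof.
move=> hi; rewrite (bigD1 (Ordinal hi)) //= eqxx big1 ?addr0 // => j /negbTE.
by rewrite -val_eqE /= => ->.
Qed.

(* p is the joint pmf of (A,B); q is the joint pmf of (A,(B,W)). *)
Theorem lemma2 (R : realType) (TA TB : finType) (p : {ffun TA * TB -> R}) :
  is_pmf p -> quasi_uniform2 p ->
  exists (TW : finType) (q : {ffun TA * (TB * TW) -> R}),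
    [/\ is_pmf q,
        (forall a b, \sum_(w : TW) q (a, (b, w)) = p (a, b)),
        entropy (snd_marg (snd_marg q)) = cond_entropy p
      & cond_entropy q = 0].
Proof.
move=> [p0 p1] [_ uB up].
have : [exists u0, 0 < p u0].
  apply/contraT => /existsPn H; move: p1.
  rewrite big1 => [/eqP|u _]; first by rewrite eq_sym oner_eq0.
  by move: (p0 u) (H u); rewrite le_eqVlt => /orP[/eqP<-|->].
case/existsP=> u0 pu0.
set c := p u0.
have F1 : forall u, p u = if 0 < p u then c else 0.
  move=> u; case: ifP => h; first exact: up.
  by move: (p0 u); rewrite le_eqVlt h orbF => /eqP<-.
pose S b := [set a | 0 < p (a, b)].
have F2 : forall b, snd_marg p b = c * #|S b|%:R.
  move=> b; rewrite ffunE -sumr_const mulr_sumr.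
  rewrite [RHS]big_mkcond; apply: eq_bigr => a _.
  by rewrite inE {1}F1 mulr1; case: ifP.
pose b0 := u0.2; pose k := #|S b0|.
have kpos : (0 < k)%N.
  by apply/card_gt0P; exists u0.1; rewrite inE /b0 -surjective_pairing.
have cn0 : c != 0 by rewrite gt_eqF.
have F3 : forall b, (0 < #|S b|)%N -> #|S b| = k.
  move=> b hb.
  have hb' : 0 < snd_marg p b by rewrite F2 mulr_gt0 // ltr0n.
  have hb0 : 0 < snd_marg p b0 by rewrite F2 mulr_gt0 // ltr0n.
  by move: (uB b b0 hb' hb0); rewrite !F2 => /(mulfI cn0)/eqP; rewrite eqr_nat => /eqP.
pose M := \sum_b c * ((0 < #|S b|)%N)%:R.
have F4 : k%:R * M = 1.
  have : \sum_b snd_marg p b = 1.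
    rewrite -p1 (eq_bigr (fun b => \sum_a p (a,b))) => [|b _]; last by rewrite ffunE.
    rewrite exchange_big pair_bigA; by apply: eq_bigr => -[].
  move=> H; rewrite -[X in _ = X]H mulr_sumr; apply: eq_bigr => b _; rewrite F2.
  case: (posnP #|S b|) => [->|h]; first by rewrite !mulr0.
  by rewrite F3 // mulr1 mulrC.
have kM : M = k%:R^-1.
  have knz : (k%:R : R) != 0 by rewrite pnatr_eq0 -lt0n kpos.
  by apply: (mulfI knz); rewrite F4 mulfV.
pose q := [ffun u : TA * (TB * 'I_#|TA|) =>
  p (u.1, u.2.1) * ((val u.2.2 == index u.1 (enum (S u.2.1)))%:R)].
have marg : forall a b, \sum_w q (a, (b, w)) = p (a, b).
  move=> a b; under eq_bigr do rewrite ffunE /=.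
  rewrite -mulr_sumr; case: (boolP (0 < p (a,b))) => h.
    rewrite sum_ord_eq ?mulr1 //.
    apply: (leq_trans _ (max_card (mem (S b)))).
    by rewrite cardE index_mem mem_enum inE.
  by rewrite F1 (negbTE h) mul0r.
exists 'I_#|TA|, q; split => //.
- split=> [u|]; first by rewrite ffunE mulr_ge0 // ler0n.
  rewrite -p1; symmetry.
  rewrite (eq_bigr (fun u => \sum_w q (u.1, (u.2, w)))); last first.
    by move=> -[a b] _; rewrite marg.
  rewrite -(pair_bigA _ (fun a b => \sum_w q (a, (b, w)))) /=.
  rewrite (eq_bigr (fun a => \sum_(bw : TB * 'I_#|TA|) q (a, bw))); last first.
    by move=> a _; rewrite pair_bigA; apply: eq_bigr => -[].
  by rewrite pair_bigA; apply: eq_bigr => -[].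
- have Fr : forall w, snd_marg (snd_marg q) w = ((val w < k)%N)%:R * k%:R^-1.
    move=> w; rewrite ffunE -kM mulr_sumr; apply: eq_bigr => b _.
    have -> : snd_marg q (b, w) = c * ((val w < #|S b|)%N)%:R.
      rewrite -sum_index_set mulr_sumr big_mkcond ffunE; apply: eq_bigr => a _.
      rewrite !ffunE /= inE {1}F1; case: ifP => _ //; by rewrite mul0r.
    case: (posnP #|S b|) => [->|h]; first by rewrite ltn0 !mulr0.
    by rewrite F3 // mulr1 mulrC.
  rewrite /entropy /cond_entropy.
  rewrite (eq_bigl (fun w : 'I_#|TA| => (val w < k)%N)); last first.
    move=> w; rewrite Fr; case: ltnP => _; rewrite ?mul1r ?mul0r ?ltxx //.
    by rewrite invr_gt0 ltr0n.
  rewrite (eq_bigr (fun _ => k%:R^-1 * ln (k%:R^-1))); last first.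
    by move=> w h; rewrite Fr h mul1r.
  rewrite -(big_ord_widen #|TA| (fun _ => k%:R^-1 * ln (k%:R^-1)) (max_card (mem (S b0)))).
  congr (- _); rewrite sumr_const card_ord -(mulr_natl (k%:R^-1 * ln (k%:R^-1)) k) mulrA mulfV ?mul1r; last first.
    by rewrite pnatr_eq0 -lt0n kpos.
  rewrite (eq_bigr (fun u => p u * ln (k%:R^-1))); last first.
    move=> -[a b] /= h; congr (_ * ln _).
    rewrite F2 F3; last by apply/card_gt0P; exists a; rewrite inE.
    by rewrite {1}F1 h invfM mulrA mulfV ?mul1r.
  rewrite -mulr_suml.
  have -> : \sum_(u | 0 < p u) p u = 1.
    rewrite -[RHS]p1 big_mkcond; apply: eq_bigr => u _.
    by case: ifP => // h; rewrite F1 h.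
  by rewrite mul1r.
- rewrite /cond_entropy big1 ?oppr0 // => -[a [b w]] /= hq.
  have hw : val w == index a (enum (S b)).
    by move: hq; rewrite ffunE /=; case: eqP => //; rewrite mulr0 ltxx.
  have hp : 0 < p (a, b) by move: hq; rewrite ffunE /= hw mulr1.
  have hs : snd_marg q (b, w) = q (a, (b, w)).
    rewrite ffunE (bigD1 a) //= big1 ?addr0 // => a' na'.
    rewrite ffunE /=; case: (boolP (0 < p (a', b))) => h'.
      rewrite (eqP hw); case: eqP => [e|]; last by rewrite mulr0.
      have ea : a = a' by apply: (index_inj a) e; rewrite mem_enum inE.
      by rewrite ea eqxx in na'.
    by rewrite F1 (negbTE h') mul0r.
  by rewrite hs mulfV ?ln1 ?mulr0 // gt_eqF.
Qed.
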